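(* Let $n \geq 2$, $m \geq 1$, and $r \in \{0,1, \dots, n-2\}$ be integers, let $\mathcal{X}_1, \dots, \mathcal{X}_m$ be vector spaces over a field $\mathbb{F}$, and for each $a \in \{1,\dots,n\}$ let $x_a = x_{a,1}\otimes\cdots\otimes x_{a,m}$ be a product vector (all $x_{a,j}\in\mathcal{X}_j$ non-zero). Suppose that: 1. For every index $j \in \{1,\dots,m\}$, $\dim \operatorname{span} \{ x_{a, j}: a \in \{1,\dots,n\}\} \geq 2$. 2. The vector $\sum_{a =1}^n x_a$ has tensor rank $r$, and for every subset $\Gamma \subset \{1,\dots,n\}$ with $r+1 \leq |\Gamma| \leq n-1$, the vector $\sum_{a \in \Gamma} x_a$ has tensor rank at least $r+1$. Then $n+r \geq m+2$.
   Context: A product vector in $\mathcal{X}_1\otimes\cdots\otimes\mathcal{X}_m$ is a vector $x_1\otimes\cdots\otimes x_m$ with all $x_j$ non-zero. The tensor rank of a non-zero vector $v$ is the smallest positive integer $r$ such that $v$ is a sum of $r$ product vectors; the tensor rank of the zero vector is $0$. *)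

(* Defs.v *)
From HB Require Import structures.
From mathcomp Require Import all_boot all_order all_algebra.
Set Implicit Arguments. Unset Strict Implicit. Unset Printing Implicit Defensive.
Import GRing.Theory.
Local Open Scope ring_scope.

(* Tensors in V_0 (x) ... (x) V_{m-1} (V_j vector spaces over a field F, of
   arbitrary dimension) are represented through the canonical INJECTIVE
   linear embedding into multilinear forms on the product of dual spaces:
   x_0 (x) ... (x) x_{m-1}  |->  (phi_0,...,phi_{m-1}) |-> prod_j phi_j(x_j). *)
Definition tensor (F : fieldType) (m : nat) (V : 'I_m -> lmodType F) :=
  (forall j : 'I_m, {scalar V j}) -> F.

Definition prodvec (F : fieldType) (m : nat) (V : 'I_m -> lmodType F)
  (x : forall j : 'I_m, V j) : tensor V :=
  fun phi => \prod_(j < m) phi j (x j).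

Definition sum_of_products (F : fieldType) (m : nat) (V : 'I_m -> lmodType F)
  (t : tensor V) (r : nat) : Prop :=
  exists xs : 'I_r -> forall j : 'I_m, V j,
    (forall i j, xs i j != 0) /\
    t = (fun phi => \sum_(i < r) prodvec (xs i) phi).

Definition tensor_rank_eq (F : fieldType) (m : nat) (V : 'I_m -> lmodType F)
  (t : tensor V) (r : nat) : Prop :=
  sum_of_products t r /\ forall r', sum_of_products t r' -> (r <= r')%N.

Definition tensor_rank_ge (F : fieldType) (m : nat) (V : 'I_m -> lmodType F)
  (t : tensor V) (k : nat) : Prop :=
  forall r', sum_of_products t r' -> (k <= r')%N.

Definition in_span (F : fieldType) (U : lmodType F) (n : nat)
  (y : 'I_n -> U) (u : U) : Prop :=
  exists c : 'I_n -> F, u = \sum_(a < n) c a *: y a.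

Definition span_dim_ge2 (F : fieldType) (U : lmodType F) (n : nat)
  (y : 'I_n -> U) : Prop :=
  exists u v : U, in_span y u /\ in_span y v /\
    forall c d : F, c *: u + d *: v = 0 -> c = 0 /\ d = 0.

(* Main.v *)
Require Import Defs.
From HB Require Import structures.
From mathcomp Require Import all_boot all_order all_algebra.
From mathcomp Require Import boolp.
From mathcomp Require classical_sets.
From mathcomp Require Import ring.
Set Implicit Arguments. Unset Strict Implicit. Unset Printing Implicit Defensive.
Import GRing.Theory.
Local Open Scope ring_scope.

Section SepDef.
Variables (F : fieldType) (V : lmodType F) (v : V) (A : V -> Prop).
Hypothesis Acl : forall (a : F) x y, A x -> A y -> A (a *: x + y).
Hypothesis Anv : ~ A v.
Hypothesis Afull : forall x, exists t : F, A (x - t *: v).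

Definition sepfun (x : V) : F^o := let _ := (Acl, Anv) in projT1 (cid (Afull x)).
Lemma sepfunP x : A (x - sepfun x *: v).
Proof. exact: (projT2 (cid (Afull x))). Qed.

Lemma sep_uniq x t t' : A (x - t *: v) -> A (x - t' *: v) -> t = t'.
Proof.
move=> h1 h2; apply/eqP; apply/negPn/negP => ne.
have h3 := Acl (- 1) h1 h2.
have e : - 1 *: (x - t *: v) + (x - t' *: v) = (t - t') *: v.
  by rewrite scaleN1r opprB addrA subrK scalerBl.
rewrite e in h3; apply: Anv.
have := Acl (t - t')^-1 h3 (Acl (-1) h3 h3).
have -> : (t - t')^-1 *: ((t - t') *: v) + (- 1 *: ((t - t') *: v) + (t - t') *: v) = v.
  by rewrite scaleN1r addNr addr0 scalerA mulVf ?scale1r // subr_eq0.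
by [].
Qed.

Lemma sepfun_lin : linear sepfun.
Proof.
move=> a x y; symmetry; apply: sep_uniq; last exact: sepfunP.
have := Acl a (sepfunP x) (sepfunP y).
suff -> : a *: (x - sepfun x *: v) + (y - sepfun y *: v) =
  a *: x + y - (a * sepfun x + sepfun y) *: v by [].
by rewrite scalerBr scalerA scalerDl opprD addrACA.
Qed.

HB.instance Definition _ := GRing.isLinear.Build F V F^o *%R sepfun sepfun_lin.

Lemma sepfun_v : sepfun v = 1.
Proof.
symmetry; apply: sep_uniq; last exact: sepfunP.
have := Acl (-1) (sepfunP v) (sepfunP v).
by rewrite scaleN1r addNr scale1r subrr.
Qed.
End SepDef.

Module SepZ.
Import classical_sets.
Local Open Scope classical_set_scope.
Lemma sep (F : fieldType) (V : lmodType F) (v : V) :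
  v != 0 -> exists phi : {scalar V}, phi v != 0.
Proof.
move=> v0.
pose P (A : set V) := (forall (a : F) x y, A x -> A y -> A (a *: x + y)) /\ ~ A v.
have [A [[Acl Anv] Amax]] : exists A, P A /\ forall B, A `<` B -> ~ P B.
  apply: Zorn_bigcup => Fm FP Ftot; split.
    move=> a x y [X FX Xx] [Y FY Yy].
    have [XY|YX] := Ftot _ _ FX FY.
      by exists Y => //; apply: (proj1 (FP _ FY)) => //; exact: XY.
    by exists X => //; apply: (proj1 (FP _ FX)) => //; exact: YX.
  by move=> [X FX Xv]; exact: (proj2 (FP _ FX)).
have A0 : A 0.
  apply: contrapT => nA0.
  apply: (Amax [set 0]); last first.
    split; first by move=> a x y -> ->; rewrite scaler0 addr0.
    by move=> /= e; move: v0; rewrite e eqxx.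
  split; first by move=> x Ax; exfalso; apply: nA0; have := Acl (-1) _ _ Ax Ax; rewrite scaleN1r addNr.
  by move=> /(_ 0 erefl).
have Afull : forall x, exists t : F, A (x - t *: v).
  move=> x; apply: contrapT => nex.
  have nex' : forall t, ~ A (x - t *: v) by move=> t At; apply: nex; exists t.
  pose B := fun y => exists w c, A w /\ y = w + c *: x.
  apply: (Amax B).
    split; first by move=> y Ay; exists y, 0; rewrite scale0r addr0.
    move=> BA; apply: (nex' 0); rewrite scale0r subr0; apply: BA.
    by exists 0, 1; rewrite scale1r add0r.
  split.
    move=> a y1 y2 [w1 [c1 [Aw1 ->]]] [w2 [c2 [Aw2 ->]]].
    exists (a *: w1 + w2), (a * c1 + c2); split; first exact: Acl.
    by rewrite scalerDr scalerA scalerDl addrACA.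
  move=> [w [c [Aw ev]]].
  have [c0|cn0] := eqVneq c 0.
    by apply: Anv; rewrite ev c0 scale0r addr0.
  apply: (nex' c^-1).
  have -> : x - c^-1 *: v = (- c^-1) *: w + 0.
    by rewrite ev addr0 scalerDr scalerA mulVf // scale1r scaleNr opprD addrCA subrr addr0.
  exact: Acl.
exists (@sepfun F V v A Acl Anv Afull : {scalar V}).
by rewrite /= sepfun_v oner_eq0.
Qed.
End SepZ.

Section Core.
Variables (F : fieldType) (m : nat) (V : 'I_m -> lmodType F).
Definition tup := forall i : 'I_m, {scalar V i}.

Lemma sepT (j0 : 'I_m) (v : V j0) : (forall Psi : tup, Psi j0 v = 0) -> v = 0.
Proof.
move=> h; apply/eqP; apply/negPn/negP => /SepZ.sep [phi hphi].
pose Psi : tup := fun i => match j0 =P i with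
  | ReflectT e => eq_rect j0 (fun k => {scalar V k}) phi i e
  | ReflectF _ => \0 end.
have ep : phi = Psi j0.
  rewrite /Psi; case: (j0 =P j0) => [e|]; last by [].
  by rewrite (eq_irrelevance e erefl).
by rewrite ep h eqxx in hphi.
Qed.

Variables (N : nat) (z : 'I_N -> forall j : 'I_m, V j) (s : 'I_N -> F).
Hypothesis hm : (1 <= m)%N.
Hypothesis hz : forall a j, z a j != 0.
Hypothesis hs : forall a, s a != 0.
Hypothesis hspan : forall j : 'I_m, ~ (exists v0 : V j, forall a, exists l : F, z a j = l *: v0).
Hypothesis hsum : forall Phi : tup, \sum_a s a * prodvec (z a) Phi = 0.
Hypothesis hmin : forall S : {set 'I_N}, S != set0 -> S != setT ->
  ~ (forall Phi : tup, \sum_(a in S) s a * prodvec (z a) Phi = 0).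

Definition Pj (j : nat) a (Phi : tup) : F := \prod_(i < m | (i < j)%N) Phi i (z a i).
Definition Tj (j : nat) a (Phi : tup) : F := \prod_(i < m | ~~ (i < j)%N) Phi i (z a i).

Definition indep j (S : {set 'I_N}) := forall c : 'I_N -> F,
  (forall Phi, \sum_(b in S) c b * Pj j b Phi = 0) -> forall b, b \in S -> c b = 0.
Definition inspan j (S : {set 'I_N}) a := exists c : 'I_N -> F,
  forall Phi, Pj j a Phi = \sum_(b in S) c b * Pj j b Phi.
Definition maxind j S := indep j S /\ forall S', indep j S' -> (#|S'| <= #|S|)%N.

Lemma prodPT j a Phi : prodvec (z a) Phi = Pj j a Phi * Tj j a Phi.
Proof. by rewrite /prodvec (bigID (fun i : 'I_m => (i < j)%N)). Qed.

Lemma fiber j (S : {set 'I_N}) : indep j S -> forall W : 'I_N -> tup -> F,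
  (forall b (Phi Psi : tup), (forall i : 'I_m, (j <= i)%N -> Phi i = Psi i) -> W b Phi = W b Psi) ->
  (forall Phi, \sum_(b in S) W b Phi * Pj j b Phi = 0) ->
  forall b, b \in S -> forall Psi, W b Psi = 0.
Proof.
move=> hS W hW hsum0 b bS Psi.
pose mg (Phi : tup) : tup := fun i => if (i < j)%N then Phi i else Psi i.
apply: (hS (fun b => W b Psi)) => // Phi.
transitivity (\sum_(b in S) W b (mg Phi) * Pj j b (mg Phi)); last exact: hsum0.
apply: eq_bigr => b' _.
congr (_ * _).
  by symmetry; apply: hW => i hi; rewrite /mg ltnNge hi.
by apply: eq_bigr => i hi; rewrite /mg hi.
Qed.

Lemma max_exists j : exists S, maxind j S.
Proof.
pose P k := `[< exists S, indep j S /\ #|S| = k >].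
have ex : exists k, P k.
  by exists 0%N; apply/asboolP; exists set0; split; [move=> c _ b; rewrite inE | rewrite cards0].
have bd : forall k, P k -> (k <= N)%N.
  by move=> k /asboolP [S [_ <-]]; rewrite -[X in (_ <= X)%N]card_ord max_card.
case: (ex_maxnP ex bd) => k /asboolP [S [hS hk]] hmax.
exists S; split => // S' hS'; rewrite hk; apply: hmax; apply/asboolP; by exists S'.
Qed.

Lemma inspan_mem j (S : {set 'I_N}) (a : 'I_N) : a \in S -> inspan j S a.
Proof.
move=> aS; exists (fun b => (b == a)%:R) => Phi.
rewrite (bigD1 a) //= eqxx mul1r big1 ?addr0 // => b /andP[_ /negbTE ->].
by rewrite mul0r.
Qed.

Lemma ext_indep j (S : {set 'I_N}) (a : 'I_N) : indep j S -> ~ inspan j S a -> indep j (a |: S).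
Proof.
move=> hS nsp.
have aS : a \notin S by apply/negP => /(inspan_mem j) //.
move=> c hc.
have ca : c a = 0.
  apply/eqP; apply/negPn/negP => ca; apply: nsp.
  exists (fun b => - c b / c a) => Phi.
  have := hc Phi; rewrite big_setU1 //= => h.
  have e : \sum_(b in S) c b * Pj j b Phi = - (c a * Pj j a Phi).
    by apply/eqP; rewrite -addr_eq0 addrC h.
  transitivity (- (c a)^-1 * \sum_(b in S) c b * Pj j b Phi).
    by rewrite e mulrN mulNr opprK mulrA mulVf // mul1r.
  rewrite mulr_sumr; apply: eq_bigr => b _; by rewrite mulrA !mulNr (mulrC (c a)^-1).
have hS' : forall Phi, \sum_(b in S) c b * Pj j b Phi = 0.
  by move=> Phi; have := hc Phi; rewrite big_setU1 //= ca mul0r add0r.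
move=> b; rewrite in_setU1 => /orP[/eqP -> //|bS].
exact: hS _ hS' _ bS.
Qed.

Lemma max_span j (S : {set 'I_N}) : maxind j S -> forall a, inspan j S a.
Proof.
move=> [hS hmax] a.
case: (boolP (a \in S)) => aS; first exact: inspan_mem.
apply: contrapT => nsp.
have := hmax _ (ext_indep hS nsp).
by rewrite cardsU1 aS add1n ltnn.
Qed.


Lemma gnz (jj : 'I_m) a : exists Psi : tup, Psi jj (z a jj) != 0.
Proof.
apply: contrapT => nex; move: (hz a jj) => /eqP; apply; apply: sepT => Psi.
by apply/eqP; apply/negPn/negP => h; apply: nex; exists Psi.
Qed.

Lemma sum_decomp j (S : {set 'I_N}) (al : 'I_N -> 'I_N -> F) (A : {set 'I_N}) Phi :
  (forall a, Pj j a Phi = \sum_(b in S) al a b * Pj j b Phi) ->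
  \sum_(a in A) s a * prodvec (z a) Phi =
  \sum_(b in S) (\sum_(a in A) s a * al a b * Tj j a Phi) * Pj j b Phi.
Proof.
move=> hal.
under eq_bigr => a _ do rewrite (prodPT j) hal mulr_suml mulr_sumr.
rewrite exchange_big /=; apply: eq_bigr => b _; rewrite mulr_suml.
by apply: eq_bigr => a _; ring.
Qed.

Lemma Tj_dep j a (Phi Psi : tup) : (forall i : 'I_m, (j <= i)%N -> Phi i = Psi i) ->
  Tj j a Phi = Tj j a Psi.
Proof. by move=> h; apply: eq_bigr => i hi; rewrite h // leqNgt. Qed.

Lemma step j (S : {set 'I_N}) (hj : (j < m)%N) : maxind j S -> (0 < #|S|)%N ->
  exists S', indep j.+1 S' /\ #|S'| = #|S|.+1.
Proof.
move=> hmax hS0.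
pose jj := Ordinal hj.
pose g a (Phi : tup) := Phi jj (z a jj).
have PjS : forall a Phi, Pj j.+1 a Phi = Pj j a Phi * g a Phi.
  move=> a Phi; rewrite /Pj (bigD1 jj) //= mulrC; congr (_ * _).
  by apply: eq_bigl => i; rewrite -val_eqE /= ltnS ltn_neqAle andbC.
have gdep : forall a (Phi Psi : tup), (forall i : 'I_m, (j <= i)%N -> Phi i = Psi i) ->
    g a Phi = g a Psi.
  by move=> a Phi Psi h; rewrite /g (h jj (leqnn j)).
have claim1 : indep j.+1 S.
  move=> c hc b bS.
  have hW : forall b (Phi Psi : tup), (forall i : 'I_m, (j <= i)%N -> Phi i = Psi i) ->
      c b * g b Phi = c b * g b Psi.
    by move=> b' Phi Psi' h; rewrite (gdep _ _ _ h).
  have hsm : forall Phi, \sum_(b in S) c b * g b Phi * Pj j b Phi = 0.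
    move=> Phi; transitivity (\sum_(b in S) c b * Pj j.+1 b Phi); last exact: hc.
    apply: eq_bigr => b' _; rewrite PjS; ring.
  case: (gnz jj b) => Psi hPsi.
  have := fiber (proj1 hmax) (W := fun b Phi => c b * g b Phi) hW hsm bS Psi.
  by move=> /eqP; rewrite mulf_eq0 (negbTE hPsi) orbF => /eqP.
have claim2 : exists a, ~ inspan j.+1 S a.
  apply: contrapT => nex.
  have hall : forall a, inspan j.+1 S a.
    by move=> a; apply: contrapT => h; apply: nex; exists a.
  case: (choice hall) => c hc.
  case: (choice (max_span hmax)) => al hal.
  have rel : forall a b, b \in S -> forall Psi, al a b * g a Psi = c a b * g b Psi.
    move=> a b bS Psi; apply/eqP; rewrite -subr_eq0; apply/eqP.
    apply: (fiber (proj1 hmax) (W := fun b Phi => al a b * g a Phi - c a b * g b Phi)) => //.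
      by move=> b' Phi Psi' h; rewrite (gdep _ _ _ h) (gdep b' _ _ h).
    move=> Phi.
    under eq_bigr => b' _ do rewrite mulrBl.
    rewrite sumrB.
    have -> : \sum_(i in S) al a i * g a Phi * Pj j i Phi = g a Phi * Pj j a Phi.
      rewrite (hal a Phi) mulr_sumr; apply: eq_bigr => i _; ring.
    have -> : \sum_(i in S) c a i * g i Phi * Pj j i Phi = Pj j.+1 a Phi.
      rewrite (hc a Phi); apply: eq_bigr => i _; rewrite PjS; ring.
    by rewrite PjS mulrC subrr.
  case/card_gt0P: hS0 => b0 b0S.
  pose C := [set a | `[< exists l : F, forall Psi, g a Psi = l * g b0 Psi >]].
  have gz : forall a, ~ (forall Psi, g a Psi = 0).
    by move=> a h; case: (gnz jj a) => Psi; rewrite /g in h; rewrite h eqxx.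
  have same : forall a b, b \in S -> al a b != 0 -> (a \in C) = (b \in C).
    move=> a b bS aln; have r := rel a b bS.
    have cn : c a b != 0.
      apply/negP => /eqP c0; apply: (gz a) => Psi.
      by have := r Psi; rewrite c0 mul0r => /eqP; rewrite mulf_eq0 (negbTE aln) /= => /eqP.
    apply/idP/idP; rewrite !inE => /asboolP [l hl]; apply/asboolP.
      exists (al a b / c a b * l) => Psi.
      have e : g b Psi = al a b / c a b * g a Psi.
        by rewrite -mulrA mulrC -mulrA [_ * al a b]mulrC r mulrA mulVf ?mul1r.
      by rewrite e hl mulrA.
    exists (c a b / al a b * l) => Psi.
    have e : g a Psi = c a b / al a b * g b Psi.
      by rewrite -mulrA mulrC -mulrA [_ * c a b]mulrC -r mulrA mulVf ?mul1r.
    by rewrite e hl mulrA.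
  have hC : forall Phi, \sum_(a in C) s a * prodvec (z a) Phi = 0.
    move=> Phi.
    rewrite (sum_decomp (al := al) _ (hal^~ Phi)).
    apply: big1 => b bS.
    have Wall : forall Phi', \sum_(a in [set: 'I_N]) s a * al a b * Tj j a Phi' = 0.
      move=> Phi'.
      apply: (fiber (proj1 hmax) (W := fun b Phi => \sum_(a in [set: 'I_N]) s a * al a b * Tj j a Phi)) => //.
        move=> b' P1 P2 h; apply: eq_bigr => a _; by rewrite (Tj_dep _ h).
      move=> P1; rewrite -(sum_decomp (al := al) _ (hal^~ P1)).
      by transitivity (\sum_a s a * prodvec (z a) P1); [apply: eq_bigl => a; rewrite in_setT | exact: hsum].
    case: (boolP (b \in C)) => bC.
      transitivity ((\sum_(a in [set: 'I_N]) s a * al a b * Tj j a Phi) * Pj j b Phi); last by rewrite Wall mul0r.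
      congr (_ * _).
      rewrite [RHS](bigID (fun a => a \in C)) /= [X in _ = _ + X]big1 ?addr0; last first.
        move=> a /andP[_ aC]; case: (eqVneq (al a b) 0) => [->|aln]; first by rewrite mulr0 mul0r.
        by move: aC; rewrite (same _ _ bS aln) bC.
      by apply: eq_bigl => a; rewrite in_setT.
    rewrite big1 ?mul0r // => a aC.
    case: (eqVneq (al a b) 0) => [->|aln]; first by rewrite mulr0 mul0r.
    by move: bC; rewrite -(same _ _ bS aln) aC.
  apply: (hmin (S := C)) => //.
    by apply/set0Pn; exists b0; rewrite inE; apply/asboolP; exists 1 => Psi; rewrite mul1r.
  apply/negP => /eqP CT.
  apply: (hspan (j := jj)); exists (z b0 jj) => a.
  have : a \in C by rewrite CT in_setT.
  rewrite inE => /asboolP [l hl]; exists l.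
  apply/eqP; rewrite -subr_eq0; apply/eqP; apply: sepT => Psi.
  rewrite linearB linearZ /=; move: (hl Psi); rewrite /g => ->.
  by apply/eqP; rewrite subr_eq0.
case: claim2 => a nsp.
have aS : a \notin S by apply/negP => /(inspan_mem j.+1).
exists (a |: S); split; first exact: ext_indep.
by rewrite cardsU1 aS.
Qed.

Lemma N_pos : (0 < N)%N.
Proof.
rewrite lt0n; apply/eqP => N0.
apply: (hspan (j := Ordinal hm)); exists 0 => a.
by exfalso; have := ltn_ord a; move: (nat_of_ord a) => k; rewrite N0.
Qed.

Definition tup0 : tup := fun i => \0.

Lemma levels j : (j <= m)%N -> forall S, maxind j S -> (j < #|S|)%N.
Proof.
elim: j => [_ S [hS hmax]|j IH hj S [hS hmax]].
  pose a0 := Ordinal N_pos.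
  have i0 : indep 0 [set a0].
    move=> c hc b; rewrite in_set1 => /eqP ->.
    have := hc tup0; rewrite big_set1 /Pj big_pred0 ?mulr1 //.
  by have := hmax _ i0; rewrite cards1.
have [S0 hS0] := max_exists j.
have lt0 := IH (ltnW hj) S0 hS0.
have [S' [hS' hc]] := step hj hS0 (leq_ltn_trans (leq0n _) lt0).
by have := hmax _ hS'; rewrite hc; apply: leq_trans.
Qed.

Lemma core_bound : (m + 2 <= N)%N.
Proof.
have [S hS] := max_exists m.
have hl := levels (leqnn m) hS.
have ST : S != setT.
  apply/negP => /eqP ST.
  have := proj1 hS s; rewrite ST => h.
  move: (hs (Ordinal N_pos)); rewrite h ?in_setT ?eqxx // => Phi.
  transitivity (\sum_a s a * prodvec (z a) Phi); last exact: hsum.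
  apply: eq_big => [a|a _]; first by rewrite in_setT.
  by congr (_ * _); rewrite /Pj /prodvec; apply: eq_bigl => i; rewrite ltn_ord.
have : (#|S| < #|[set: 'I_N]|)%N by apply: proper_card; rewrite properT.
rewrite cardsT card_ord => h.
by rewrite addn2; apply: leq_ltn_trans h.
Qed.

End Core.

Lemma splitL n r (a : 'I_n) : split (lshift r a) = inl a.
Proof. exact: (unsplitK (inl _ a)). Qed.
Lemma splitR n r (a : 'I_r) : split (rshift n a) = inr a.
Proof. exact: (unsplitK (inr _ a)). Qed.

Lemma superset n (G : {set 'I_n}) d : (#|G| + d <= n)%N ->
  exists Ga : {set 'I_n}, G \subset Ga /\ #|Ga| = (#|G| + d)%N.
Proof.
elim: d => [|d IH] h; first by exists G; rewrite addn0.
have h' : (#|G| + d <= n)%N by apply: leq_trans h; rewrite addnS.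
have [Ga [sG cG]] := IH h'.
have : (0 < #|~: Ga|)%N.
  have := cardsC Ga; rewrite card_ord => e.
  have : (#|G| + d.+1 <= #|Ga| + #|~:Ga|)%N by rewrite e.
  by rewrite cG addnS -addn1 leq_add2l.
case/card_gt0P => t; rewrite inE => tG.
exists (t |: Ga); split; first by apply: (subset_trans sG); apply: subsetUr.
by rewrite cardsU1 tG cG addnS.
Qed.

Section Main.
Variables (F : fieldType) (n m r : nat) (V : 'I_m -> lmodType F)
  (x : 'I_n -> forall j : 'I_m, V j) (ys : 'I_r -> forall j : 'I_m, V j).
Hypothesis hx : forall a j, x a j != 0.
Hypothesis hys : forall i j, ys i j != 0.

Lemma sop2 (A : {set 'I_r}) (B : {set 'I_n}) :
  sum_of_products (fun Phi => \sum_(k in A) prodvec (ys k) Phi + \sum_(a in B) prodvec (x a) Phi)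
    (#|A| + #|B|).
Proof.
pose xs (i : 'I_(#|A| + #|B|)) := match split i with
  | inl p => ys (enum_val p) | inr q => x (enum_val q) end.
exists xs; split.
  by move=> i j; rewrite /xs; case: (split i) => p.
apply: funext => Phi /=.
rewrite big_split_ord /=; congr (_ + _); rewrite big_enum_val; apply: eq_bigr => i _;
  by rewrite /xs ?splitL ?splitR.
Qed.
End Main.

From mathcomp Require Import zify.

Lemma ltT k (A : {set 'I_k}) : A != setT -> (#|A| < k)%N.
Proof.
move=> h; have := proper_card (A := A) (B := setT).
by rewrite properT h cardsT card_ord; apply.
Qed.

Unset Implicit Arguments.
Theorem theorem4 (F : fieldType) (n m r : nat) (V : 'I_m -> lmodType F)
  (x : 'I_n -> forall j : 'I_m, V j) :
  (2 <= n)%N -> (1 <= m)%N -> (r <= n - 2)%N ->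
  (forall a j, x a j != 0) ->
  (forall j : 'I_m, span_dim_ge2 (fun a : 'I_n => x a j)) ->
  tensor_rank_eq (fun phi => \sum_(a < n) prodvec (x a) phi) r ->
  (forall Gamma : {set 'I_n}, (r.+1 <= #|Gamma|)%N -> (#|Gamma| <= n - 1)%N ->
     tensor_rank_ge (fun phi => \sum_(a in Gamma) prodvec (x a) phi) r.+1) ->
  (m + 2 <= n + r)%N.
Proof.
move=> hn hm hr hx hsp [[ys [hys hT]] hrmin] hsub.
have hT' : forall Phi, \sum_(a < n) prodvec (x a) Phi = \sum_(i < r) prodvec (ys i) Phi.
  by move=> Phi; have := congr1 (fun f => f Phi) hT.
have Hr : forall H : {set 'I_r}, (#|H| <= r)%N.
  by move=> H; rewrite -[X in (_ <= X)%N]card_ord max_card.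
have K : forall (G : {set 'I_n}) (H : {set 'I_r}),
    (forall Phi, \sum_(a in G) prodvec (x a) Phi = \sum_(k in H) prodvec (ys k) Phi) ->
    (0 < #|G|)%N -> (#|G| < n)%N -> (#|G| <= #|H|)%N.
  move=> G H e G0 Gn.
  have HH := Hr H.
  case: (leqP r.+1 #|G|) => hG.
    have Gn1 : (#|G| <= n - 1)%N by lia.
    have sp := sop2 hx hys H set0.
    have eqf : (fun Phi => \sum_(k in H) prodvec (ys k) Phi + \sum_(a in set0) prodvec (x a) Phi)
        = (fun phi => \sum_(a in G) prodvec (x a) phi).
      by apply: funext => Phi; rewrite big_set0 addr0 e.
    rewrite eqf in sp.
    have := hsub G hG Gn1 _ sp; rewrite cards0; lia.
  have [Ga [sG cG]] := @superset n G (r.+1 - #|G|) ltac:(lia).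
  have Ga1 : (r.+1 <= #|Ga|)%N by lia.
  have Ga2 : (#|Ga| <= n - 1)%N by lia.
  have sp := sop2 hx hys H (Ga :\: G).
  have eqf : (fun Phi => \sum_(k in H) prodvec (ys k) Phi + \sum_(a in Ga :\: G) prodvec (x a) Phi)
      = (fun phi => \sum_(a in Ga) prodvec (x a) phi).
    apply: funext => Phi; rewrite -e [RHS](big_setID G).
    by rewrite (setIidPr sG).
  rewrite eqf in sp.
  have := hsub Ga Ga1 Ga2 _ sp; rewrite cardsD (setIidPr sG); lia.
have K0 : forall H : {set 'I_r},
    (forall Phi, \sum_(k in H) prodvec (ys k) Phi = 0) -> H = set0.
  move=> H e.
  have sp := sop2 hx hys (~: H) set0.
  have eqf : (fun Phi => \sum_(k in ~: H) prodvec (ys k) Phi + \sum_(a in set0) prodvec (x a) Phi)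
      = (fun phi => \sum_(a < n) prodvec (x a) phi).
    apply: funext => Phi; rewrite big_set0 addr0 hT' [RHS](bigID (fun k => k \in H)) /=.
    rewrite [X in _ = X + _](_ : _ = 0) ?add0r; last exact: e.
    by apply: eq_bigl => k; rewrite inE.
  rewrite eqf in sp.
  have := hrmin _ sp; rewrite cards0 addn0 => h.
  have := cardsC H; rewrite card_ord => e2.
  by apply/eqP; rewrite -cards_eq0; apply/eqP; lia.
pose z (i : 'I_(n + r)) := match split i with inl a => x a | inr k => ys k end.
pose s (i : 'I_(n + r)) : F := match split i with inl _ => 1 | inr _ => -1 end.
have zL : forall a, z (lshift r a) = x a by move=> a; rewrite /z splitL.
have zR : forall k, z (rshift n k) = ys k by move=> k; rewrite /z splitR.
have sL : forall a, s (lshift r a) = 1 by move=> a; rewrite /s splitL.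
have sR : forall k, s (rshift n k) = -1 by move=> k; rewrite /s splitR.
have hsumz : forall Phi, \sum_i s i * prodvec (z i) Phi = 0.
  move=> Phi; rewrite big_split_ord /=.
  under eq_bigr => i _ do rewrite zL sL mul1r.
  under [X in _ + X]eq_bigr => i _ do rewrite zR sR mulN1r.
  by rewrite sumrN hT' subrr.
have := @core_bound F m V (n + r) z s hm; apply.
- by move=> i j; rewrite /z; case: (split i) => ?; [exact: hx | exact: hys].
- by move=> i; rewrite /s; case: (split i) => _; rewrite ?oppr_eq0 oner_neq0.
- move=> j [v0 hv0].
  case: (hsp j) => u [v [[cu hu] [[cv hv] hind]]].
  have hl : forall a, exists l : F, x a j = l *: v0 by move=> a; rewrite -zL; exact: hv0.
  case: (choice hl) => l hl'.
  have hu' : u = (\sum_a cu a * l a) *: v0.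
    by rewrite hu scaler_suml; apply: eq_bigr => a _; rewrite hl' scalerA.
  have hv' : v = (\sum_a cv a * l a) *: v0.
    by rewrite hv scaler_suml; apply: eq_bigr => a _; rewrite hl' scalerA.
  set lu := \sum_a cu a * l a in hu'.
  set lv := \sum_a cv a * l a in hv'.
  have [e1 e2] := hind lv (- lu) ltac:(by rewrite hu' hv' !scalerA -scalerDl mulNr (mulrC lv) subrr scale0r).
  have u0 : u = 0 by rewrite hu' -[lu]opprK e2 oppr0 scale0r.
  have [h1 _] := hind 1 0 ltac:(by rewrite u0 scaler0 scale0r addr0).
  by move: (oner_neq0 F); rewrite h1 eqxx.
- exact: hsumz.
move=> S S0 ST hS0.
pose SA (S : {set 'I_(n + r)}) := [set a | lshift r a \in S].
pose SB (S : {set 'I_(n + r)}) := [set k | rshift n k \in S].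
have eqS : forall S : {set 'I_(n + r)},
    (forall Phi, \sum_(i in S) s i * prodvec (z i) Phi = 0) ->
    forall Phi, \sum_(a in SA S) prodvec (x a) Phi = \sum_(k in SB S) prodvec (ys k) Phi.
  move=> S' h Phi; have := h Phi; rewrite big_split_ord /=.
  have -> : \sum_(i < n | lshift r i \in S') s (lshift r i) * prodvec (z (lshift r i)) Phi
      = \sum_(a in SA S') prodvec (x a) Phi.
    by apply: eq_big => [a|a _]; rewrite ?inE // zL sL mul1r.
  have -> : \sum_(i < r | rshift n i \in S') s (rshift n i) * prodvec (z (rshift n i)) Phi
      = - \sum_(k in SB S') prodvec (ys k) Phi.
    by rewrite -sumrN; apply: eq_big => [a|a _]; rewrite ?inE // zR sR mulN1r.
  by move=> /eqP; rewrite subr_eq0 => /eqP.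
have compl : forall S : {set 'I_(n + r)},
    (forall Phi, \sum_(i in S) s i * prodvec (z i) Phi = 0) ->
    (forall Phi, \sum_(i in ~: S) s i * prodvec (z i) Phi = 0).
  move=> S' h Phi; have := hsumz Phi.
  rewrite (bigID (fun i => i \in S')) /= (h Phi) add0r => e.
  by transitivity (\sum_(i | i \notin S') s i * prodvec (z i) Phi);
    [apply: eq_bigl => i; rewrite inE | exact: e].
have SAC : forall S : {set 'I_(n + r)}, SA (~: S) = ~: SA S by move=> S'; apply/setP => a; rewrite !inE.
have SBC : forall S : {set 'I_(n + r)}, SB (~: S) = ~: SB S by move=> S'; apply/setP => a; rewrite !inE.
have emp : forall S : {set 'I_(n + r)}, SA S = set0 -> SB S = set0 -> S = set0.
  move=> S' hA hB; apply/setP => i; rewrite inE -(splitK i); case: (split i) => [a|k] /=.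
    apply/negbTE; apply/negP => h; have : a \in SA S' by rewrite inE.
    by rewrite hA inE.
  apply/negbTE; apply/negP => h; have : k \in SB S' by rewrite inE.
  by rewrite hB inE.
have hA0' : forall S : {set 'I_(n + r)}, (forall Phi, \sum_(i in S) s i * prodvec (z i) Phi = 0) ->
    SA S = set0 -> S = set0.
  move=> S' h hA; apply: emp => //; apply: K0 => Phi.
  by rewrite -(eqS S' h Phi) hA big_set0.
case: (eqVneq (SA S) set0) => hA0.
  by move: S0; rewrite (hA0' S hS0 hA0) eqxx.
case: (eqVneq (SA S) setT) => hAT.
  have : ~: S = set0 by apply: (hA0' _ (compl S hS0)); rewrite SAC hAT setCT.
  move=> /(congr1 (@setC _)); rewrite setCK setC0 => e.
  by move: ST; rewrite e eqxx.
have k1 := K _ _ (eqS S hS0) ltac:(by rewrite card_gt0) (ltT hAT).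
have c1 : (0 < #|SA (~: S)|)%N.
  rewrite SAC card_gt0; apply/eqP => e; move: hAT; rewrite -(setCK (SA S)) e setC0 eqxx.
  by [].
have c2 : (#|SA (~: S)| < n)%N.
  apply: ltT; rewrite SAC; apply/eqP => e; move: hA0; rewrite -(setCK (SA S)) e setCT eqxx.
  by [].
have k2 := K _ _ (eqS _ (compl S hS0)) c1 c2.
rewrite SAC SBC in k2.
have := cardsC (SA S); have := cardsC (SB S); rewrite !card_ord.
move=> u1 u2; move: k1 k2 u1 u2 hr hn.
move: #|SA S| #|~: SA S| #|SB S| #|~: SB S| => a b c d; lia.
Qed.
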